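(* In the setting below, assume $Z^j\epsilon_{\bullet,j}\ne0$ for all $j$, that for some $c>1$ $$\lambda\ge\frac{c+1}{c-1}\max_{i\in[n]}\Big(\sum_{j\in[p]}\frac{(Z^j_{i,\bullet}\epsilon_{\bullet,j})^2}{\|Z^j\epsilon_{\bullet,j}\|_2^2}\Big)^{1/2},$$ and that there is a matrix $V\in\mathbb R^{n\times p}$ with $\|V_{i,\bullet}\|_2\le1$ for all $i$ such that for every $j\in[p]$, $\|Z^j\widehat\Delta_{\bullet,j}\|_2^2=\xi_{\bullet,j}^\top Z^j\widehat\Delta_{\bullet,j}-\lambda\|\widehat\xi_{\bullet,j}\|_2V_{\bullet,j}^\top\widehat\Delta_{\bullet,j}$, where $\widehat\xi_{\bullet,j}=Z^j(X^{(n)}_{\bullet,j}-\widehat\Theta_{\bullet,j})$. Then $$\sum_{j=1}^p\|Z^j\widehat\Delta_{\bullet,j}\|_2^2\le2\lambda\|\xi^\top\|_{2,\infty}\|\widehat\Delta\|_{2,1}\Big(\frac{c-1}{c+1}+2\Big)+\big(\lambda\|\widehat\Delta\|_{2,1}\big)^2.$$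
   Context: Setting. Let $n,p\ge 1$, $[n]=\{1,\dots,n\}$. $X=Y+E^*\in\mathbb R^{n\times p}$ where (C1) the rows of $Y$ are independent $\mathcal N_p(\mu^*,\Sigma^* )$, $\Sigma^*$ positive definite; (C2) $E^*$ deterministic, $[n]=I\cup O$ a partition with the rows of $E^*$ indexed by $I$ equal to zero, and every row of $E^*(\Sigma^* )^{-1/2}$ of Euclidean norm at most $M_E\sqrt p$; $\mu^*=0$. $\Omega^*=(\Sigma^* )^{-1}$ with diagonal entries $\omega^*_{jj}$, $B^*=\Omega^*\mathrm{diag}(\Omega^* )^{-1}$, $X^{(n)}=X/\sqrt n$, $\Theta^*=E^*B^*/\sqrt n$, $\xi=X^{(n)}B^*-\Theta^*$, $\epsilon_{ij}=\sqrt n(\omega^*_{jj})^{1/2}\xi_{ij}$. Notation: $A_{i,\bullet}$, $A_{\bullet,j}$ rows/columns, $j^c=[p]\setminus\{j\}$, $\|A\|_{2,1}=\sum_i\|A_{i,\bullet}\|_2$, $\|\xi^\top\|_{2,\infty}=\max_j\|\xi_{\bullet,j}\|_2$. $Z^j$ is the orthogonal projector in $\mathbb R^n$ onto the orthogonal complement of the span of the columns of $X_{\bullet,j^c}$. Estimator: $\widehat\Theta$ minimizes over $\Theta\in\mathbb R^{n\times p}$ the function $\sum_{j=1}^p\|Z^j(X^{(n)}_{\bullet,j}-\Theta_{\bullet,j})\|_2+\lambda\|\Theta\|_{2,1}$, and $\widehat\Delta=\widehat\Theta-\Theta^*$. *)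

(* Defs.v *)
(* the statement is purely algebraic/order-theoretic
   over the reals, stated for an arbitrary real closed field R. *)
From HB Require Import structures.
From mathcomp Require Import all_boot all_order all_algebra.
Set Implicit Arguments. Unset Strict Implicit. Unset Printing Implicit Defensive.
Import Order.TTheory GRing.Theory Num.Theory.
Local Open Scope ring_scope.

Section Defs.
Variable R : rcfType.

Definition cnorm m (v : 'cV[R]_m) : R := Num.sqrt (\sum_i (v i 0) ^+ 2).
Definition rnorm m (v : 'rV[R]_m) : R := Num.sqrt (\sum_j (v 0 j) ^+ 2).

Definition cdot m (u v : 'cV[R]_m) : R := \sum_i u i 0 * v i 0.

Definition norm21 n p (A : 'M[R]_(n, p)) : R := \sum_i rnorm (row i A).

Definition normT2inf n p (A : 'M[R]_(n, p)) : R :=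
  \big[Num.max/0]_j cnorm (col j A).

Definition posdef p (S : 'M[R]_p) : Prop :=
  S^T = S /\ forall v : 'rV[R]_p, v != 0 -> 0 < (v *m S *m v^T) 0 0.

(* P is the orthogonal projector of R^m onto the subspace spanned by the
   rows of U (vectors identified with columns; P symmetric so row and
   column spaces of P coincide) *)
Definition is_orth_proj m k (P : 'M[R]_m) (U : 'M[R]_(k, m)) : Prop :=
  P^T = P /\ P *m P = P /\ (P == U)%MS.

(* the orthogonal complement of the span of the columns of X_{.,j^c}
   is the row kernel {u | u^T X_{.,j^c} = 0} = kermx (col' j X) *)
Definition Zproj n p (X : 'M[R]_(n, p)) (Z : 'I_p -> 'M[R]_n) : Prop :=
  forall j, is_orth_proj (Z j) (kermx (col' j X)).

Definition scaleN n p (X : 'M[R]_(n, p)) : 'M[R]_(n, p) :=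
  (Num.sqrt (n%:R))^-1 *: X.

(* B = Omega diag(Omega)^{-1}, with Omega = inverse of Sigma *)
Definition Bmat p (Om : 'M[R]_p) : 'M[R]_p := \matrix_(i, j) (Om i j / Om j j).

Definition objective n p (Z : 'I_p -> 'M[R]_n) (Xn : 'M[R]_(n, p))
  (lambda : R) (Th : 'M[R]_(n, p)) : R :=
  \sum_j cnorm (Z j *m col j (Xn - Th)) + lambda * norm21 Th.

End Defs.

(* Main.v *)
Require Import Defs.
From HB Require Import structures.
From mathcomp Require Import all_boot all_order all_algebra.
From mathcomp Require Import ring lra.
Set Implicit Arguments. Unset Strict Implicit. Unset Printing Implicit Defensive.
Import Order.TTheory GRing.Theory Num.Theory.
Local Open Scope ring_scope.

Section S.
Variable R : rcfType.

Lemma sumsq_ge0 m (x : 'I_m -> R) : 0 <= \sum_i x i ^+ 2.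
Proof. by apply: sumr_ge0 => i _; exact: sqr_ge0. Qed.

Lemma sumsq_eq0 m (x : 'I_m -> R) : \sum_i x i ^+ 2 = 0 -> forall i, x i = 0.
Proof.
move=> /eqP; rewrite psumr_eq0 => [/allP H i|i _]; last exact: sqr_ge0.
by have := H i (mem_index_enum i); rewrite sqrf_eq0 => /eqP.
Qed.

Lemma CS m (x y : 'I_m -> R) :
  \sum_i x i * y i <= Num.sqrt (\sum_i x i ^+ 2) * Num.sqrt (\sum_i y i ^+ 2).
Proof.
set A := Num.sqrt _; set B := Num.sqrt _.
have hA : 0 <= A by exact: sqrtr_ge0.
have hB : 0 <= B by exact: sqrtr_ge0.
have A2 : A ^+ 2 = \sum_i x i ^+ 2 by rewrite sqr_sqrtr // sumsq_ge0.
have B2 : B ^+ 2 = \sum_i y i ^+ 2 by rewrite sqr_sqrtr // sumsq_ge0.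
have key : 0 <= \sum_i (x i * B - y i * A) ^+ 2 by exact: sumsq_ge0.
have E : \sum_i (x i * B - y i * A) ^+ 2 =
   B^+2 * \sum_i x i ^+ 2 - 2 * A * B * \sum_i x i * y i + A^+2 * \sum_i y i ^+ 2.
  rewrite (eq_bigr (fun i => B^+2 * x i^+2 - 2*A*B*(x i*y i) + A^+2 * y i^+2)).
    by rewrite big_split sumrB /= !mulr_sumr.
  by move=> i _; ring.
rewrite E A2 B2 in key.
have [AB0|ABp] := eqVneq (A * B) 0.
  move: AB0 => /eqP; rewrite mulf_eq0 => /orP[/eqP a0|/eqP b0].
  - have : \sum_i x i ^+ 2 = 0 by rewrite -A2 a0 expr0n.
    move/sumsq_eq0 => h; rewrite big1 ?a0 ?mul0r // => i _; by rewrite h mul0r.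
  - have : \sum_i y i ^+ 2 = 0 by rewrite -B2 b0 expr0n.
    move/sumsq_eq0 => h; rewrite big1 ?b0 ?mulr0 // => i _; by rewrite h mulr0.
have ABp' : 0 < A * B by rewrite lt0r ABp mulr_ge0.
rewrite -A2 -B2 in key.
nra.
Qed.
Lemma cnorm_ge0 m (v : 'cV[R]_m) : 0 <= cnorm v.
Proof. exact: sqrtr_ge0. Qed.

Lemma cnorm_sq m (v : 'cV[R]_m) : cnorm v ^+ 2 = \sum_i v i 0 ^+ 2.
Proof. by rewrite /cnorm sqr_sqrtr // sumsq_ge0. Qed.

Lemma sq_le (a b : R) : 0 <= b -> a ^+ 2 <= b ^+ 2 -> a <= b.
Proof. move=> hb h; nra. Qed.

Lemma cdot_le m (u v : 'cV[R]_m) : cdot u v <= cnorm u * cnorm v.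
Proof. exact: (CS (fun i => u i 0) (fun i => v i 0)). Qed.

Lemma cnormB m (u w : 'cV[R]_m) : cnorm (u - w) <= cnorm u + cnorm w.
Proof.
apply: sq_le; first by rewrite addr_ge0 // cnorm_ge0.
have h := cdot_le u (- w).
have hw : cnorm (- w) = cnorm w.
  by rewrite /cnorm; congr Num.sqrt; apply: eq_bigr => i _; rewrite mxE sqrrN.
rewrite hw /cdot in h.
have E : cnorm (u - w) ^+ 2 = cnorm u ^+ 2 + 2 * \sum_i u i 0 * (- w) i 0 + cnorm w ^+ 2.
  rewrite !cnorm_sq mulr_sumr -!big_split /=; apply: eq_bigr => i _; rewrite !mxE; ring.
rewrite E; nra.
Qed.

Lemma cdot_sym_mx m (Z : 'M[R]_m) (u w : 'cV[R]_m) : Z^T = Z ->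
  cdot u (Z *m w) = cdot (Z *m u) w.
Proof.
move=> hZ; rewrite /cdot.
under eq_bigr => i _ do rewrite mxE mulr_sumr.
rewrite exchange_big /=; apply: eq_bigr => k _.
rewrite mxE mulr_suml; apply: eq_bigr => i _.
have -> : Z i k = Z k i by rewrite -{1}hZ mxE.
ring.
Qed.

Lemma cnorm_proj m (Z : 'M[R]_m) (u : 'cV[R]_m) : Z^T = Z -> Z *m Z = Z ->
  cnorm (Z *m u) <= cnorm u.
Proof.
move=> hT hI.
have h : cnorm (Z *m u) ^+ 2 = cdot u (Z *m u).
  rewrite cnorm_sq -[in X in cdot _ X]hI -mulmxA cdot_sym_mx // /cdot.
have := cdot_le u (Z *m u); rewrite -h => h2.
have := cnorm_ge0 (Z *m u); have := cnorm_ge0 u; nra.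
Qed.

Lemma cnormZ m (s : R) (v : 'cV[R]_m) : cnorm (s *: v) = `|s| * cnorm v.
Proof.
rewrite /cnorm -sqrtr_sqr -sqrtrM ?sqr_ge0 // mulr_sumr; congr Num.sqrt.
by apply: eq_bigr => i _; rewrite mxE exprMn.
Qed.

Lemma sum_abs_cdot n p (W D : 'M[R]_(n,p)) :
  \sum_j `|cdot (col j W) (col j D)| <= \sum_i rnorm (row i W) * rnorm (row i D).
Proof.
apply: (@le_trans _ _ (\sum_j \sum_i `|W i j| * `|D i j|)).
  apply: ler_sum => j _; rewrite /cdot.
  apply: (le_trans (ler_norm_sum _ _ _)).
  by apply: ler_sum => i _; rewrite !mxE normrM.
rewrite exchange_big /=; apply: ler_sum => i _.
have h := CS (fun j => `|W i j|) (fun j => `|D i j|).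
apply: (le_trans h); rewrite /rnorm.
apply: ler_pM; rewrite ?sqrtr_ge0 // ler_sqrt ?sumsq_ge0 //;
  apply: ler_sum => j _; by rewrite !mxE real_normK ?num_real.
Qed.

Lemma sumsq_le_sqsum p (v : 'I_p -> R) :
  \sum_j v j ^+ 2 <= (\sum_j `|v j|) ^+ 2.
Proof.
rewrite [X in _ <= X]expr2 mulr_sumr; apply: ler_sum => j _.
rewrite -real_normK ?num_real // expr2 mulrC; apply: ler_wpM2r => //.
rewrite (bigD1 j) //= lerDl; by apply: sumr_ge0.
Qed.

Lemma perj (N t lam h g a v : R) : N^+2 = t - lam*h*v -> 0 <= lam -> 0 <= h ->
  h <= g + N -> g <= a -> 0 <= N -> 0 <= g ->
  N^+2 <= 2*t + 2*lam*a*`|v| + lam^+2 * v^+2.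
Proof.
move=> E hl hh hhg hga hN hg.
have v1 : - v <= `|v| by rewrite -normrN ler_norm.
have v0 : 0 <= `|v| by [].
have v2 : `|v| ^+ 2 = v ^+ 2 by rewrite real_normK ?num_real.
have s1 : - (lam * h * v) <= lam * h * `|v|.
  by rewrite -mulrN; apply: ler_wpM2l => //; rewrite mulr_ge0.
have s2 : lam * h * `|v| <= lam * (a + N) * `|v|.
  apply: ler_wpM2r => //; apply: ler_wpM2l => //; lra.
have s3 : 2 * (lam * N * `|v|) <= N ^+ 2 + lam ^+ 2 * v ^+ 2.
  rewrite -v2; have := sqr_ge0 (N - lam * `|v|); nra.
nra.
Qed.

Lemma le_bigmaxr m (F : 'I_m -> R) i : F i <= \big[Num.max/0]_j F j.
Proof. exact: le_bigmax. Qed.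
Lemma bigmaxr_ge0 m (F : 'I_m -> R) : 0 <= \big[Num.max/0]_j F j.
Proof. exact: bigmax_ge_id. Qed.
End S.
Theorem mainTheorem8 (R : rcfType) (n p : nat) (hn : (1 <= n)%N) (hp : (1 <= p)%N)
  (Sigma : 'M[R]_(p, p)) (E X : 'M[R]_(n, p))
  (I : {set 'I_n}) (ME : R) (Shalf : 'M[R]_(p, p))
  (Z : 'I_p -> 'M[R]_n) (lambda c : R) (Thhat V : 'M[R]_(n, p)) :
  (* (C1): Sigma^* positive definite; X = Y + E^* where Y is a realization *)
  posdef Sigma ->
  (* (C2): rows of E^* indexed by I vanish; rows of E^* Sigma^{-1/2} bounded *)
  (forall i, i \in I -> row i E = 0) ->
  posdef Shalf -> Shalf *m Shalf = invmx Sigma ->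
  (forall i, rnorm (row i (E *m Shalf)) <= ME * Num.sqrt (p%:R)) ->
  (* Z^j *)
  Zproj X Z ->
  let Om := invmx Sigma in
  let B := Bmat Om in
  let Xn := scaleN X in
  let Thstar := (Num.sqrt (n%:R))^-1 *: (E *m B) in
  let xi := Xn *m B - Thstar in
  let eps := \matrix_(i, j) (Num.sqrt (n%:R) * Num.sqrt (Om j j) * xi i j) in
  let Delta := Thhat - Thstar in
  (* Thhat minimizes the objective *)
  (forall Th, objective Z Xn lambda Thhat <= objective Z Xn lambda Th) ->
  (forall j, Z j *m col j eps != 0) ->
  1 < c ->
  (c + 1) / (c - 1) *
    \big[Num.max/0]_(i < n)
      Num.sqrt (\sum_(j < p)
        ((row i (Z j) *m col j eps) 0 0) ^+ 2 / (cnorm (Z j *m col j eps)) ^+ 2)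
    <= lambda ->
  (forall i, rnorm (row i V) <= 1) ->
  (forall j,
     (cnorm (Z j *m col j Delta)) ^+ 2 =
       cdot (col j xi) (Z j *m col j Delta)
       - lambda * cnorm (Z j *m col j (Xn - Thhat)) * cdot (col j V) (col j Delta)) ->
  \sum_(j < p) (cnorm (Z j *m col j Delta)) ^+ 2
    <= 2 * lambda * normT2inf xi * norm21 Delta * ((c - 1) / (c + 1) + 2)
       + (lambda * norm21 Delta) ^+ 2.
Proof.
move=> hSig hI hSh hSh2 hE hZ Om B Xn Thstar xi eps Delta hmin hZeps hc hlam hV hid.
have hZT j : (Z j)^T = Z j by case: (hZ j).
have hZZ j : Z j *m Z j = Z j by case: (hZ j) => _ [].
have hker j : Z j *m col' j X = 0.
  case: (hZ j) => _ [_ /andP [h1 _]]; by move: h1; rewrite sub_kermx => /eqP.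
have hz j l i : l != j -> \sum_m Z j i m * X m l = 0.
  move=> hl; rewrite eq_sym in hl; have [l' -> _] := unlift_some hl.
  transitivity ((Z j *m col' j X) i l'); last by rewrite hker mxE.
  by rewrite mxE; apply: eq_bigr => m _; rewrite mxE.
pose s j := Num.sqrt (n%:R) * Num.sqrt (Om j j).
have hcol j : col j eps = s j *: col j xi.
  by apply/matrixP => i k; rewrite !mxE.
have hs j : s j != 0.
  apply/negP => /eqP s0; have := hZeps j; rewrite hcol s0 scale0r mulmx0 eqxx //.
have hOm j : Om j j != 0.
  apply/negP => /eqP o0; have := hs j; rewrite /s o0 sqrtr0 mulr0 eqxx //.
have hXB j : Z j *m col j (Xn *m B) = Z j *m col j Xn.
  apply/matrixP => i k; rewrite !mxE.
  transitivity (\sum_m Z j i m * \sum_l Xn m l * B l j).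
    by apply: eq_bigr => m _; rewrite !mxE.
  under eq_bigr => m _ do rewrite mulr_sumr.
  rewrite exchange_big /= (bigD1 j) //= [X in _ + X]big1 ?addr0.
    apply: eq_bigr => m _; rewrite !mxE divff ?mulr1 //.
  move=> l hl.
  transitivity (B l j * ((Num.sqrt n%:R)^-1 * \sum_m Z j i m * X m l)).
    rewrite !mulr_sumr; apply: eq_bigr => m _; rewrite /Xn /scaleN !mxE; ring.
  by rewrite hz // !mulr0.
have hZxi j : Z j *m col j (Xn - Thstar) = Z j *m col j xi.
  by rewrite /xi !linearB /= hXB.
pose a := normT2inf xi.
have ha0 : 0 <= a by rewrite /a /normT2inf; apply: bigmax_ge_id.
have hg j : cnorm (Z j *m col j xi) <= a.
  apply: le_trans (cnorm_proj _ (hZT j) (hZZ j)) _; exact: le_bigmax.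
have hh j : cnorm (Z j *m col j (Xn - Thhat)) <=
    cnorm (Z j *m col j xi) + cnorm (Z j *m col j Delta).
  have -> : Xn - Thhat = (Xn - Thstar) - Delta by rewrite /Delta opprB addrA subrK.
  rewrite linearB mulmxBr hZxi; exact: cnormB.
set M := \big[Num.max/0]_(i < n) _ in hlam.
have hM0 : 0 <= M by rewrite /M; apply: bigmax_ge_id.
pose k := (c - 1) / (c + 1).
have hk0 : 0 <= k by rewrite /k divr_ge0 //; lra.
have hl0 : 0 <= lambda.
  apply: le_trans hlam; rewrite mulr_ge0 // divr_ge0 //; lra.
have hMk : M <= k * lambda.
  have -> : M = k * ((c + 1) / (c - 1) * M).
    rewrite /k; field; apply/andP; split; apply/negP => /eqP; lra.
  by apply: ler_wpM2l.
pose W := \matrix_(i, j) (Z j *m col j xi) i 0.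
have hcolW j : col j W = Z j *m col j xi.
  by apply/matrixP => i q; rewrite (ord1 q) [LHS]mxE [LHS]mxE.
have ht j : cdot (col j xi) (Z j *m col j Delta) = cdot (col j W) (col j Delta).
  by rewrite cdot_sym_mx // hcolW.
pose r i j := ((row i (Z j) *m col j eps) 0 0) ^+ 2 / cnorm (Z j *m col j eps) ^+ 2.
have hr i j : (row i W 0 j) ^+ 2 <= a ^+ 2 * r i j.
  have e1 : (row i (Z j) *m col j eps) 0 0 = s j * (Z j *m col j xi) i 0.
    by rewrite -row_mul hcol -scalemxAr mxE [LHS]mxE.
  have e2 : cnorm (Z j *m col j eps) = `|s j| * cnorm (Z j *m col j xi).
    by rewrite hcol -scalemxAr cnormZ.
  have e3 : row i W 0 j = (Z j *m col j xi) i 0 by rewrite [LHS]mxE [LHS]mxE.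
  rewrite /r e1 e2 e3.
  move: (Z j *m col j xi) (hg j) (hs j) => v hv hsj.
  have [g0|gn0] := eqVneq (cnorm v) 0.
    have := cnorm_sq v; rewrite g0 expr0n /= => /esym/sumsq_eq0 ->.
    by rewrite !mulr0 expr0n /= mul0r mulr0.
  have -> : (s j * v i 0) ^+ 2 / (`|s j| * cnorm v) ^+ 2 = v i 0 ^+ 2 / cnorm v ^+ 2.
    rewrite exprMn [X in _ / X]exprMn real_normK ?num_real //.
    by field; rewrite gn0 hsj.
  have hv0 := cnorm_ge0 v.
  set q := v i 0 ^+ 2 / cnorm v ^+ 2.
  have hq : 0 <= q by rewrite /q divr_ge0 // sqr_ge0.
  have e : v i 0 ^+ 2 = q * cnorm v ^+ 2 by rewrite /q divfK // expf_neq0.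
  rewrite e [a ^+ 2 * q]mulrC; apply: ler_wpM2l => //; nra.
have hsum i : \sum_j r i j <= M ^+ 2.
  have hle : Num.sqrt (\sum_j r i j) <= M.
    exact: (le_bigmaxr (fun i => Num.sqrt (\sum_j r i j)) i).
  have h0 : 0 <= \sum_j r i j.
    by apply: sumr_ge0 => j _; rewrite /r divr_ge0 // sqr_ge0.
  rewrite -(sqr_sqrtr h0); have := sqrtr_ge0 (\sum_j r i j); nra.
have hWrow i : rnorm (row i W) <= a * M.
  rewrite /rnorm; apply: (@le_trans _ _ (Num.sqrt ((a * M) ^+ 2))); last first.
    by rewrite sqrtr_sqr ger0_norm ?mulr_ge0.
  rewrite ler_sqrt ?sqr_ge0 //.
  apply: (@le_trans _ _ (\sum_j a ^+ 2 * r i j)); first exact: ler_sum.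
  rewrite -mulr_sumr exprMn; apply: ler_wpM2l => //; exact: sqr_ge0.
have F4 : \sum_j cdot (col j xi) (Z j *m col j Delta) <= a * M * norm21 Delta.
  rewrite (eq_bigr _ (fun j _ => ht j)).
  apply: le_trans (ler_sum _ (fun j _ => ler_norm _)) _.
  apply: le_trans (sum_abs_cdot W Delta) _.
  rewrite /norm21 mulr_sumr; apply: ler_sum => i _.
  by apply: ler_wpM2r (hWrow i); exact: sqrtr_ge0.
have F3 : \sum_j `|cdot (col j V) (col j Delta)| <= norm21 Delta.
  apply: le_trans (sum_abs_cdot V Delta) _; apply: ler_sum => i _.
  rewrite -[X in _ <= X]mul1r; apply: ler_wpM2r (hV i); exact: sqrtr_ge0.
have hP j := perj (hid j) hl0 (cnorm_ge0 _) (hh j) (hg j) (cnorm_ge0 _) (cnorm_ge0 _).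
apply: le_trans (ler_sum _ (fun j _ => hP j)) _.
rewrite !big_split /= -!mulr_sumr.
have hV2 := sumsq_le_sqsum (fun j => cdot (col j V) (col j Delta)).
move: F4 F3 hV2.
set T := \sum_j _; set V1 := \sum_j `|_|; set V2 := \sum_j _ ^+ 2.
fold a.
have hD0 : 0 <= norm21 Delta by apply: sumr_ge0 => i _; exact: sqrtr_ge0.
have hV10 : 0 <= V1 by apply: sumr_ge0.
move: (norm21 Delta) hD0 => Dn hD0 F4 F3 hV2.
have s1 : a * M * Dn <= a * (k * lambda) * Dn.
  by apply: ler_wpM2r => //; apply: ler_wpM2l.
have s2 : V1 ^+ 2 <= Dn ^+ 2 by nra.
have s3 : lambda * a * V1 <= lambda * a * Dn by apply: ler_wpM2l => //; rewrite mulr_ge0.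
have s4 : lambda ^+ 2 * V2 <= lambda ^+ 2 * Dn ^+ 2.
  apply: ler_wpM2l; [exact: sqr_ge0 | exact: le_trans hV2 s2].
have s5 : 0 <= lambda * a * Dn by rewrite !mulr_ge0.
rewrite -/k; rewrite exprMn; nra.
Qed.
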